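(* In the Standing Setting, let $(p,B)$ be a flag with $p=(\alpha,\beta)$, let $c$ be the number of points of $B$ whose first coordinate is $\alpha$, and $d$ the number of points of $B$ whose second coordinate is $\beta$ (both counts include $p$). Then $k=\frac{(c+d-2)(\omega+1)}{2}+1$.
   Context: Standing Setting: $\mathcal{D}=(\Omega,\mathcal{B})$ is a non-trivial $2$-$(v,k,\lambda)$ design (every two distinct points in exactly $\lambda$ blocks, blocks of size $k$, $2<k<v$) with $b$ blocks and replication number $r$, satisfying $\lambda\ge (r,\lambda)^2$. $G\le\mathrm{Aut}(\mathcal{D})$ is flag-transitive (transitive on pairs $(p,B)$ with $p\in B\in\mathcal{B}$). Moreover $\Omega=\Delta\times\Delta$ with $|\Delta|=\omega\ge 5$ odd, so $v=\omega^2$, and $T\times T\trianglelefteq G\le T_0\wr \mathbb{Z}_2$ acting in product action (the $\mathbb{Z}_2$ interchanging the two coordinates), where $T_0\le\mathrm{Sym}(\Delta)$ is $2$-transitive with nonabelian simple socle $T$; $G$ has rank $3$ on $\Omega$. *)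

(* Defs.v *)
From mathcomp Require Import all_boot all_fingroup all_solvable.
Set Implicit Arguments.
Unset Strict Implicit.
Unset Printing Implicit Defensive.
Local Open Scope group_scope.

Section Defs.
Variable Delta : finType.
Local Notation Om := (prod Delta Delta).

Definition prodfun (g h : {perm Delta}) (u : Om) : Om := (g u.1, h u.2).

Lemma prodfun_inj g h : injective (prodfun g h).
Proof.
move=> [x1 y1] [x2 y2] /= [] /perm_inj -> /perm_inj -> //.
Qed.

Definition prodperm (g h : {perm Delta}) : {perm Om} := perm (@prodfun_inj g h).

Definition swapfun (u : Om) : Om := (u.2, u.1).
Lemma swapfun_inj : injective swapfun.
Proof. by move=> [x1 y1] [x2 y2] /= [] -> ->. Qed.
Definition swapperm : {perm Om} := perm swapfun_inj.

Definition base_group (T : {set {perm Delta}}) : {set {perm Om}} :=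
  [set prodperm g h | g in T, h in T].

Definition wreath_prod (T0 : {set {perm Delta}}) : {set {perm Om}} :=
  <<base_group T0 :|: [set swapperm]>>.

End Defs.

Definition socle (gT : finGroupType) (G : {set gT}) : {set gT} :=
  <<\bigcup_(N : {group gT} | (N \subset G) && minnormal N G) N>>.

Section Design.
Variable P : finType.

Definition is_2design (Bs : {set {set P}}) (k lam : nat) : Prop :=
  (0 < lam)%N /\
  (forall B, B \in Bs -> #|B| = k) /\
  (forall x y : P, x != y -> #|[set B in Bs | (x \in B) && (y \in B)]| = lam).

Definition repl_number (Bs : {set {set P}}) (r : nat) : Prop :=
  forall x : P, #|[set B in Bs | x \in B]| = r.

Definition is_aut_group (G : {set {perm P}}) (Bs : {set {set P}}) : Prop :=
  forall g B, g \in G -> B \in Bs -> [set g x | x in B] \in Bs.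

Definition flag_transitive (G : {set {perm P}}) (Bs : {set {set P}}) : Prop :=
  forall p B p' B', B \in Bs -> p \in B -> B' \in Bs -> p' \in B' ->
    exists2 g, g \in G & g p = p' /\ [set g x | x in B] = B'.

Definition rank3 (G : {set {perm P}}) : Prop :=
  [transitive G, on [set: P] | 'P] /\
  forall x : P, #|orbit 'P ('C_G[x | 'P]) @: [set: P]| = 3%N.

End Design.

(* Main.v *)
Require Import Defs.
From mathcomp Require Import all_boot all_fingroup all_solvable.
From mathcomp Require Import zify.
Set Implicit Arguments. Unset Strict Implicit.


Definition adj (D : finType) (u v : D * D) := (u.1 == v.1) || (u.2 == v.2).

Definition presS (D : finType) : {set {perm (D * D)}} :=
  [set g : {perm (D * D)} | [forall u : D * D, forall v : D * D, adj (g u) (g v) == adj u v]].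

Lemma presS_group (D : finType) : group_set (presS D).
Proof.
apply/group_setP; split.
  by rewrite inE; apply/forallP=> u; apply/forallP=> v; rewrite !perm1.
move=> g h; rewrite !inE => /forallP Hg /forallP Hh.
apply/forallP=> u; apply/forallP=> v; rewrite !permM.
by rewrite (eqP (forallP (Hh _) _)) (eqP (forallP (Hg _) _)).
Qed.

Canonical presG (D : finType) := Group (presS_group D).

Lemma wreath_pres (D : finType) (T0 : {set {perm D}}) g u v :
  g \in wreath_prod T0 -> adj (g u) (g v) = adj u v.
Proof.
move=> Hg.
have : g \in presG D.
  apply: (subsetP _ _ Hg); rewrite /wreath_prod gen_subG.
  apply/subsetP=> x; rewrite inE => /orP [].
    case/imset2P=> a b _ _ ->; rewrite inE.
    apply/forallP=> w; apply/forallP=> z; rewrite /adj !permE /prodfun /=.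
    by rewrite !(inj_eq perm_inj).
  rewrite inE => /eqP ->; rewrite inE.
  apply/forallP=> w; apply/forallP=> z; rewrite /adj !permE /swapfun /=.
  by rewrite orbC.
by rewrite inE => /forallP/(_ u)/forallP/(_ v)/eqP.
Qed.


Lemma dcount (P : finType) (Bs : {set {set P}}) k lam r (G : {set {perm P}})
  p B (Gam : {set P}) :
  is_2design Bs k lam -> repl_number Bs r -> flag_transitive G Bs ->
  B \in Bs -> p \in B -> p \notin Gam ->
  (forall g, g \in G -> g p = p -> forall q, (g q \in Gam) = (q \in Gam)) ->
  (lam * #|Gam| = r * #|Gam :&: B|)%N.
Proof.
move=> [_ [_ Hl]] Hr Hf HB Hp HpG Hinv.
pose Bp := [set B' in Bs | p \in B'].
have E1 : (\sum_(x in Gam) \sum_(B' in Bp) (x \in B') = lam * #|Gam|)%N.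
  rewrite mulnC -sum_nat_const; apply: eq_bigr => x xG.
  rewrite -big_mkcondr sum1_card -(Hl p x); last first.
    by apply/eqP=> px; rewrite px xG in HpG.
  apply: eq_card => B'; rewrite !inE; idtac.
  by rewrite -topredE /= /Bp inE andbA.
have E2 : (\sum_(B' in Bp) \sum_(x in Gam) (x \in B') = r * #|Gam :&: B|)%N.
  rewrite -(Hr p) -sum_nat_const; apply: eq_bigr => B'.
  rewrite inE => /andP [HB' HpB'].
  rewrite -big_mkcondr sum1_card.
  have [g gG [gp gB]] := Hf p B p B' HB Hp HB' HpB'.
  have -> : #|[pred x in Gam | x \in B']| = #|Gam :&: B'|.
    by apply: eq_card => x; rewrite !inE.
  have gGam : [set g x | x in Gam] = Gam.
    apply/eqP; rewrite eqEcard card_imset ?leqnn ?andbT; last exact: perm_inj.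
    by apply/subsetP=> y /imsetP [x xG ->]; rewrite Hinv.
  rewrite -gB -{1}gGam -imsetI; last by move=> x y _ _; exact: perm_inj.
  by rewrite card_imset //; exact: perm_inj.
by rewrite -E1 -E2 exchange_big.
Qed.

Lemma arith (lam r w m1 m2 s1 s2 c d k : nat) : (0 < lam)%N -> (5 <= w)%N ->
  (lam * s1 = r * m1)%N -> (lam * s2 = r * m2)%N -> k = (m1 + m2 + 1)%N ->
  (m1 + 2 = c + d)%N -> (s1 + s2 + 1 = w * w)%N -> s2 = ((w - 1) * (w - 1))%N ->
  k = ((c + d - 2) * (w + 1)) %/ 2 + 1.
Proof.
move=> lam0 H5 D1 D2 kB cd cT cS2.
have [v wv] : exists v, w = v.+1 by exists w.-1; rewrite prednK //; lia.
subst w; rewrite subn1 /= in cS2.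
have s1E : s1 = (2 * v)%N by rewrite cS2 mulSn mulnS in cT; lia.
have E : (lam * (s1 * m2) = lam * (s2 * m1))%N.
  by rewrite mulnA D1 mulnA D2 -!mulnA (mulnC m1).
move/eqP: E; rewrite eqn_mul2l (negbTE (lt0n_neq0 lam0)) /= s1E cS2 => /eqP E.
have E2 : (2 * m2 = v * m1)%N.
  have v0 : (0 < v)%N by lia.
  apply/eqP; rewrite -(eqn_pmul2l v0); apply/eqP.
  by rewrite !mulnA (mulnC v 2) E.
have -> : (c + d - 2 = m1)%N by lia.
have -> : (m1 * (v.+1 + 1) = 2 * (m1 + m2))%N.
  by rewrite [RHS]mulnDr E2 -mulnDl mulnC addn1 add2n.
by rewrite mulKn //; lia.
Qed.

Theorem lemma2p2
  (Delta : finType)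
  (Bs : {set {set (Delta * Delta)}}) (k lam r : nat)
  (T0 : {group {perm Delta}}) (T : {group {perm Delta}})
  (G : {group {perm (Delta * Delta)}})
  (Hodd : odd #|Delta|) (H5 : (5 <= #|Delta|)%N)
  (Hdes : is_2design Bs k lam)
  (Hk : (2 < k < #|Delta| ^ 2)%N)
  (Hr : repl_number Bs r)
  (Hlam : (gcdn r lam ^ 2 <= lam)%N)
  (Haut : is_aut_group G Bs)
  (Hflag : flag_transitive G Bs)
  (H2tr : [transitive^2 T0, on [set: Delta] | 'P])
  (HsocT : socle T0 = T)
  (HTsimple : simple T) (HTnab : ~~ abelian T)
  (HTTnorm : (base_group T <| G)%g)
  (HGwr : G \subset wreath_prod T0)
  (Hrank : rank3 G)
  (p : Delta * Delta) (B : {set (Delta * Delta)})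
  (HB : B \in Bs) (Hp : p \in B) :
  let c := #|[set q in B | q.1 == p.1]| in
  let d := #|[set q in B | q.2 == p.2]| in
  k = ((c + d - 2) * (#|Delta| + 1)) %/ 2 + 1.
Proof.
move=> c d.
set w := #|Delta|.
pose A := [set q | adj p q].
pose S1 := A :\ p.
pose S2 := ~: A.
have pA : p \in A by rewrite inE /adj !eqxx.
have split3 : forall X : {set Delta * Delta}, p \in X ->
    #|X| = (#|X :&: S1| + #|X :&: S2| + 1)%N.
  move=> X pX; rewrite -(cardsID A X) (cardsD1 p (X :&: A)) inE pX pA /=.
  have -> : (X :&: A) :\ p = X :&: S1 by apply/setP=> q; rewrite !inE andbCA.
  by rewrite setDE [RHS]addnC addnA.
have cS2 : #|S2| = ((w - 1) * (w - 1))%N.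
  have -> : S2 = setX [set~ p.1] [set~ p.2].
    by apply/setP=> [[x y]]; rewrite !inE /adj negb_or !(eq_sym x) (eq_sym y).
  by rewrite cardsX !cardsC1 subn1.
have cT : (#|S1| + #|S2| + 1 = w * w)%N.
  by rewrite -card_prod -cardsT (split3 _ (in_setT p)) !setTI.
have inv : forall S, S = S1 \/ S = S2 -> forall g, g \in G -> g p = p ->
    forall q, (g q \in S) = (q \in S).
  move=> S HS g gG gp q.
  have gw : g \in wreath_prod T0 by apply: (subsetP HGwr).
  have E : adj p (g q) = adj p q by rewrite -{1}gp (@wreath_pres _ _ g p q gw).
  case: HS => ->; rewrite !inE E //.
  by rewrite -{1}gp (inj_eq perm_inj).
have pS1 : p \notin S1 by rewrite !inE eqxx.
have pS2 : p \notin S2 by rewrite inE pA.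
have D1 := dcount Hdes Hr Hflag HB Hp pS1 (inv _ (or_introl erefl)).
have D2 := dcount Hdes Hr Hflag HB Hp pS2 (inv _ (or_intror erefl)).
have Hk' : #|B| = k by case: Hdes => _ [-> ].
have kB := split3 B Hp.
have cd : (#|B :&: S1| + 2 = c + d)%N.
  rewrite /c /d -cardsUI.
  have -> : [set q in B | q.1 == p.1] :&: [set q in B | q.2 == p.2] = [set p].
    apply/setP=> q; rewrite !inE; apply/idP/idP.
      by case/andP=> /andP [_ e1] /andP [_ e2]; rewrite -pair_eqE /pair_eq e1 e2.
    by move/eqP->; rewrite Hp !eqxx.
  have -> : [set q in B | q.1 == p.1] :|: [set q in B | q.2 == p.2] = (B :&: S1) :|: [set p].
    apply/setP=> q; rewrite !inE /adj (eq_sym p.1) (eq_sym p.2).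
    case: (eqVneq q p) => [->|nqp]; first by rewrite Hp !eqxx.
    by rewrite /= orbF andb_orr.
  by rewrite setUC cardsU1 cards1 !inE eqxx andbF /= add1n addn1 addn2.
rewrite setIC in D1; rewrite setIC in D2.
have lam0 : (0 < lam)%N by case: Hdes.
rewrite Hk' in kB.
exact: (arith lam0 H5 D1 D2 kB cd cT cS2).
Qed.
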